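(* For a finite set $\Gamma=\{\gamma_1,\dots,\gamma_n\}$ of tape symbols, the tape theory over $\Gamma$ is not finitely axiomatizable: there is no finite set of equations in the tape signature whose deductive closure under equational logic equals the tape theory.
   Context: For $i\in\mathbb Z$, $k\ge 0$ and $\sigma,\sigma':\mathbb Z\to\Gamma$ write $\sigma=_{i\pm k}\sigma'$ if $\sigma(j)=\sigma'(j)$ for all $j$ with $|i-j|\le k$, and $\sigma=^{i\pm k}\sigma'$ if $\sigma(j)=\sigma'(j)$ for all $j$ with $|i-j|>k$; write $\sigma_{+j}=\sigma\circ(\lambda i.\,i+j)$. The tape monad over $\Gamma$ assigns to a set $X$ the set $TX$ of maps $\langle r,z,t\rangle:\mathbb Z\times\Gamma^{\mathbb Z}\to X\times\mathbb Z\times\Gamma^{\mathbb Z}$ for which there is $k\ge0$ such that for all $i,j\in\mathbb Z$ and all $\sigma,\sigma'$ with $\sigma=_{i\pm k}\sigma'$: $t(i,\sigma)=_{i\pm k}t(i,\sigma')$, $r(i,\sigma)=r(i,\sigma')$, $|z(i,\sigma)-i|\le k$, $t(i,\sigma)=^{i\pm k}\sigma$, $z(i,\sigma)=z(i,\sigma')$, $t(i,\sigma_{+j})=t(i+j,\sigma)_{+j}$, $r(i,\sigma_{+j})=r(i+j,\sigma)$, $z(i,\sigma_{+j})=z(i+j,\sigma)-j$. The tape signature consists of an $n$-ary operation $read$, unary operations $write_i$ ($1\le i\le n$), and unary operations $lmove$, $rmove$, interpreted on each $TX$ by $read(p_1,\dots,p_n)(z,\sigma)=p_{\sigma(z)}(z,\sigma)$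 (where $p_{\gamma_i}$ means $p_i$), $write_i(p)(z,\sigma)=p(z,\sigma[z\mapsto\gamma_i])$, $lmove(p)(z,\sigma)=p(z-1,\sigma)$, $rmove(p)(z,\sigma)=p(z+1,\sigma)$, where $\sigma[z\mapsto\gamma]$ agrees with $\sigma$ except that it maps $z$ to $\gamma$. The tape theory over $\Gamma$ is the set of all equations $p=q$ between terms of the tape signature that are valid under this interpretation in $TX$ for every set $X$. *)

(* Defs.v *)
From Stdlib Require Import ZArith List.
From mathcomp Require Import all_boot.

Set Implicit Arguments.
Unset Strict Implicit.
Unset Printing Implicit Defensive.

(* The tape alphabet Gamma = {gamma_1, ..., gamma_n} is represented by 'I_n,
   gamma_i being the ordinal i-1. Tapes are maps Z -> 'I_n. *)
Definition tape (n : nat) := Z -> 'I_n.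

Definition agree_near (n : nat) (i k : Z) (s s' : tape n) : Prop :=
  forall j : Z, (Z.abs (i - j) <= k)%Z -> s j = s' j.

Definition agree_far (n : nat) (i k : Z) (s s' : tape n) : Prop :=
  forall j : Z, (Z.abs (i - j) > k)%Z -> s j = s' j.

Definition shift (n : nat) (s : tape n) (j : Z) : tape n := fun m => s (m + j)%Z.

Definition upd (n : nat) (s : tape n) (z : Z) (g : 'I_n) : tape n :=
  fun m => if Z.eqb m z then g else s m.

(* The ambient space of maps Z x Gamma^Z -> X x Z x Gamma^Z, written curried as
   p z sigma = (r(z,sigma), z(z,sigma), t(z,sigma)). *)
Definition M (n : nat) (X : Type) := Z -> tape n -> X * Z * tape n.

Definition rr n X (p : M n X) i s : X := fst (fst (p i s)).
Definition zz n X (p : M n X) i s : Z := snd (fst (p i s)).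
Definition tt n X (p : M n X) i s : tape n := snd (p i s).

Definition inT (n : nat) (X : Type) (p : M n X) : Prop :=
  exists k : Z, (0 <= k)%Z /\
    forall (i j : Z) (s s' : tape n), agree_near i k s s' ->
      agree_near i k (tt p i s) (tt p i s') /\
      rr p i s = rr p i s' /\
      (Z.abs (zz p i s - i) <= k)%Z /\
      agree_far i k (tt p i s) s /\
      zz p i s = zz p i s' /\
      tt p i (shift s j) = shift (tt p (i + j)%Z s) j /\
      rr p i (shift s j) = rr p (i + j)%Z s /\
      zz p i (shift s j) = (zz p (i + j)%Z s - j)%Z.

Inductive term (n : nat) : Type :=
| Var : nat -> term n
| Read : ('I_n -> term n) -> term n
| Write : 'I_n -> term n -> term n
| Lmove : term n -> term n
| Rmove : term n -> term n.

Arguments Var {n} _.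

Fixpoint interp (n : nat) (X : Type) (v : nat -> M n X) (t : term n) : M n X :=
  match t with
  | Var x => v x
  | Read ps => fun z s => interp v (ps (s z)) z s
  | Write g p => fun z s => interp v p z (upd s z g)
  | Lmove p => fun z s => interp v p (z - 1)%Z s
  | Rmove p => fun z s => interp v p (z + 1)%Z s
  end.

Definition valid (n : nat) (p q : term n) : Prop :=
  forall (X : Type) (v : nat -> M n X), (forall x, inT (v x)) ->
    forall (z : Z) (s : tape n), interp v p z s = interp v q z s.

Fixpoint subst (n : nat) (f : nat -> term n) (t : term n) : term n :=
  match t with
  | Var x => f x
  | Read ps => Read (fun i => subst f (ps i))
  | Write g p => Write g (subst f p)
  | Lmove p => Lmove (subst f p)
  | Rmove p => Rmove (subst f p)
  end.

Inductive derivable (n : nat) (E : list (term n * term n)) : term n -> term n -> Prop :=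
| d_ax : forall l r (f : nat -> term n), In (l, r) E -> derivable E (subst f l) (subst f r)
| d_refl : forall p, derivable E p p
| d_sym : forall p q, derivable E p q -> derivable E q p
| d_trans : forall p q u, derivable E p q -> derivable E q u -> derivable E p u
| d_read : forall ps qs, (forall i, derivable E (ps i) (qs i)) -> derivable E (Read ps) (Read qs)
| d_write : forall g p q, derivable E p q -> derivable E (Write g p) (Write g q)
| d_lmove : forall p q, derivable E p q -> derivable E (Lmove p) (Lmove q)
| d_rmove : forall p q, derivable E p q -> derivable E (Rmove p) (Rmove q).

(* Main.v *)
Require Import Defs.
From Stdlib Require Import ZArith List Lia FunctionalExtensionality.
From mathcomp Require Import all_boot.

Set Implicit Arguments.
Unset Strict Implicit.
Unset Printing Implicit Defensive.

Section S.
Variable n : nat.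

Definition updM (m : Z) (t : tape n) (z : Z) (g : 'I_n) : tape n :=
  fun j => if Z.eqb ((j - z) mod m)%Z 0%Z then g else t j.

Definition per (m : Z) (t : tape n) : Prop :=
  forall j j', ((j - j') mod m)%Z = 0%Z -> t j = t j'.

Fixpoint semM (m : Z) (u : term n) (z : Z) (t : tape n) : nat * Z * tape n :=
  match u with
  | Var x => (x, z, t)
  | Read ps => semM m (ps (t z)) z t
  | Write g p => semM m p z (updM m t z g)
  | Lmove p => semM m p (z - 1)%Z t
  | Rmove p => semM m p (z + 1)%Z t
  end.

Fixpoint bnd (d : nat) (u : term n) : Prop :=
  match u with
  | Var _ => True
  | Read ps => forall i, bnd d (ps i)
  | Write _ p => bnd d p
  | Lmove p => match d with 0 => False | S d' => bnd d' p end
  | Rmove p => match d with 0 => False | S d' => bnd d' p end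
  end.

Lemma bnd_mono u : forall d d', bnd d u -> le d d' -> bnd d' u.
Proof.
induction u as [x|ps IH|g p IH|p IH|p IH]; simpl; intros d d' H Hle; auto.
- intro i; exact (IH i d d' (H i) Hle).
- exact (IH d d' H Hle).
- destruct d as [|d]; [contradiction|]. destruct d' as [|d']; [lia|].
  apply (IH d d' H); lia.
- destruct d as [|d]; [contradiction|]. destruct d' as [|d']; [lia|].
  apply (IH d d' H); lia.
Qed.

Lemma fin_bound (P : 'I_n -> nat -> Prop) :
  (forall i d d', P i d -> le d d' -> P i d') -> (forall i, exists d, P i d) ->
  exists d, forall i, P i d.
Proof.
intros Hm Hex.
assert (K : forall k, exists d, forall i : 'I_n, lt (nat_of_ord i) k -> P i d).
{ induction k as [|k [d Hd]].
  - exists 0%nat; intros i Hi; lia.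
  - destruct (ltnP k n) as [hk|hk].
    + destruct (Hex (Ordinal hk)) as [dk Hdk].
      exists (Nat.max d dk); intros i Hi.
      destruct (Nat.eq_dec (nat_of_ord i) k) as [E|E].
      * have -> : i = Ordinal hk by apply: val_inj.
        apply (Hm _ dk); [exact Hdk|lia].
      * apply (Hm _ d); [apply Hd; lia|lia].
    + exists d; intros i Hi; apply Hd.
      have := ltn_ord i. move=> h. apply/ltP. exact: leq_trans h hk. }
destruct (K n) as [d Hd]; exists d; intro i; apply Hd; apply/ltP; exact: ltn_ord.
Qed.

Lemma bnd_ex u : exists d, bnd d u.
Proof.
induction u as [x|ps IH|g p IH|p IH|p IH]; simpl.
- exists 0%nat; exact I.
- apply (@fin_bound (fun i d => bnd d (ps i))); auto.
  intros i d d' H Hle; exact (bnd_mono H Hle).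
- exact IH.
- destruct IH as [d H]; exists (S d); exact H.
- destruct IH as [d H]; exists (S d); exact H.
Qed.

Definition pi (m b D j : Z) : Z := (b - D + (j - b + D) mod m)%Z.

Lemma pi_id m b D z : (0 <= D)%Z -> (2 * D < m)%Z -> (Z.abs (z - b) <= D)%Z ->
  pi m b D z = z.
Proof.
intros h1 h2 h3; unfold pi. rewrite Z.mod_small; lia.
Qed.

Lemma pi_eq m b D z j : (0 <= D)%Z -> (2 * D < m)%Z -> (Z.abs (z - b) <= D)%Z ->
  Z.eqb ((j - z) mod m)%Z 0%Z = Z.eqb (pi m b D j) z.
Proof.
intros h1 h2 h3; unfold pi.
destruct (Z.eqb_spec ((j - z) mod m) 0) as [E|E];
destruct (Z.eqb_spec (b - D + (j - b + D) mod m) z) as [F|F]; auto; exfalso.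
- apply F. have Q := Z.div_mod (j - z) m ltac:(lia). rewrite E Z.add_0_r in Q.
  have -> : (j - b + D = (z - b + D) + ((j - z) / m) * m)%Z by lia.
  rewrite Z.mod_add; [|lia]. rewrite Z.mod_small; lia.
- apply E. have Q := Z.div_mod (j - b + D) m ltac:(lia).
  have -> : (j - z = 0 + ((j - b + D) / m) * m)%Z by lia.
  rewrite Z.mod_add; [|lia]. reflexivity.
Qed.

Lemma pi_cong m b D j : (0 < m)%Z -> ((j - pi m b D j) mod m)%Z = 0%Z.
Proof.
intros h; unfold pi. have Q := Z.div_mod (j - b + D) m ltac:(lia).
have -> : (j - (b - D + (j - b + D) mod m) = 0 + ((j - b + D) / m) * m)%Z by lia.
rewrite Z.mod_add; [|lia]. reflexivity.
Qed.

Lemma updM_per m t z g : (0 < m)%Z -> per m t -> per m (updM m t z g).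
Proof.
intros hm Ht j j' E; unfold updM.
have -> : ((j - z) mod m)%Z = ((j' - z) mod m)%Z.
{ have Q := Z.div_mod (j - j') m ltac:(lia). rewrite E Z.add_0_r in Q.
  have -> : (j - z = (j' - z) + ((j - j') / m) * m)%Z by lia.
  rewrite Z.mod_add; [|lia]. reflexivity. }
destruct (Z.eqb _ 0); auto.
Qed.

Lemma semM_per m u : (0 < m)%Z -> forall z t, per m t -> per m (snd (semM m u z t)).
Proof.
intro hm; induction u as [x|ps IH|g p IH|p IH|p IH]; simpl; intros z t Ht; auto.
apply IH; apply updM_per; auto.
Qed.

Lemma semM_subst m f u : forall z t, semM m (subst f u) z t =
  match semM m u z t with (x, z', t') => semM m (f x) z' t' end.
Proof.
induction u as [x|ps IH|g p IH|p IH|p IH]; simpl; intros z t; auto.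
Qed.

Definition ret (x : nat) : M n nat := fun z s => (x, z, s).

Lemma ret_inT x : inT (ret x).
Proof.
exists 0%Z; split; [lia|]; intros i j s s' H; unfold tt, rr, zz, ret; simpl.
split; [exact H|]. split; [reflexivity|]. split; [lia|].
split; [intros k _; reflexivity|]. split; [reflexivity|]. split; [reflexivity|].
split; [reflexivity|]. lia.
Qed.

Lemma sim m b D (hD : (0 <= D)%Z) (hm : (2 * D < m)%Z) u : forall d z s tm,
  bnd d u -> (Z.abs (z - b) + Z.of_nat d <= D)%Z ->
  (forall j, tm j = s (pi m b D j)) ->
  semM m u z tm = (fst (fst (interp ret u z s)), snd (fst (interp ret u z s)),
                   fun j => snd (interp ret u z s) (pi m b D j)).
Proof.
induction u as [x|ps IH|g p IH|p IH|p IH]; simpl; intros d z s tm Hb Hz Ht.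
- unfold ret; simpl. f_equal. apply functional_extensionality; exact Ht.
- rewrite Ht pi_id; try lia. apply (IH _ d); auto.
- apply (IH d); auto. intro j. unfold updM, upd. rewrite (@pi_eq m b D z j hD hm); [|lia].
  destruct (Z.eqb _ z); auto.
- destruct d as [|d]; [contradiction|]. apply (IH d); auto. lia.
- destruct d as [|d]; [contradiction|]. apply (IH d); auto. lia.
Qed.

Lemma subst_var (u : term n) : subst Var u = u.
Proof.
induction u as [x|ps IH|g p IH|p IH|p IH]; simpl; auto; try (f_equal; auto).
apply functional_extensionality; exact IH.
Qed.

Lemma interp_iterR X (v : nat -> M n X) k p : forall z s,
  interp v (iter k (@Rmove n) p) z s = interp v p (z + Z.of_nat k)%Z s.
Proof.
induction k as [|k IH]; intros z s; simpl.
- f_equal; lia.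
- rewrite IH; f_equal; lia.
Qed.

Lemma interp_iterL X (v : nat -> M n X) k p : forall z s,
  interp v (iter k (@Lmove n) p) z s = interp v p (z - Z.of_nat k)%Z s.
Proof.
induction k as [|k IH]; intros z s; simpl.
- f_equal; lia.
- rewrite IH; f_equal; lia.
Qed.

Lemma semM_iterR m k p : forall z s,
  semM m (iter k (@Rmove n) p) z s = semM m p (z + Z.of_nat k)%Z s.
Proof.
induction k as [|k IH]; intros z s; simpl.
- f_equal; lia.
- rewrite IH; f_equal; lia.
Qed.

Lemma semM_iterL m k p : forall z s,
  semM m (iter k (@Lmove n) p) z s = semM m p (z - Z.of_nat k)%Z s.
Proof.
induction k as [|k IH]; intros z s; simpl.
- f_equal; lia.
- rewrite IH; f_equal; lia.
Qed.

End S.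

Theorem mainTheorem2 (n : nat) (hn : (2 <= n)%N) :
  forall E : list (term n * term n),
    ~ (forall p q : term n, derivable E p q <-> valid p q).
Proof.
intros E H.
assert (HB : exists d, forall l r, In (l, r) E -> bnd d l /\ bnd d r).
{ clear H; induction E as [|[l r] E IH].
  - exists 0%nat; intros l r [].
  - destruct IH as [d Hd]. destruct (bnd_ex l) as [dl Hl]. destruct (bnd_ex r) as [dr Hr].
    exists (Nat.max d (Nat.max dl dr)); intros l' r' [Eq|Hin].
    + injection Eq as -> ->. split; [apply (bnd_mono Hl)|apply (bnd_mono Hr)]; lia.
    + destruct (Hd _ _ Hin) as [h1 h2]; split; [apply (bnd_mono h1)|apply (bnd_mono h2)]; lia. }
destruct HB as [Dn HB].
set D := Z.of_nat Dn.
set mN := Nat.add (Nat.mul 2 Dn) 2.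
set m := Z.of_nat mN.
have hm : (2 * D < m)%Z by (unfold m, D, mN; lia).
have hD : (0 <= D)%Z by (unfold D; lia).
have hm0 : (0 < m)%Z by lia.
assert (HEm : forall l r, In (l, r) E -> forall z t, per m t -> semM m l z t = semM m r z t).
{ intros l r Hin z t Ht.
  have Hd : derivable E l r.
  { rewrite -(subst_var l) -(subst_var r). apply d_ax; exact Hin. }
  have Hv := proj1 (H l r) Hd nat (@ret n) (@ret_inT n) z t.
  destruct (HB _ _ Hin) as [bl br].
  have Ht' : forall j, t j = t (pi m z D j).
  { intro j; apply Ht. rewrite (pi_cong z D j hm0). reflexivity. }
  rewrite (sim hD hm bl (z:=z) (s:=t) _ Ht'); [|unfold D; rewrite Z.sub_diag; simpl; lia].
  rewrite (sim hD hm br (z:=z) (s:=t) _ Ht'); [|unfold D; rewrite Z.sub_diag; simpl; lia].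
  rewrite Hv; reflexivity. }
assert (Hs : forall p q, derivable E p q -> forall z t, per m t -> semM m p z t = semM m q z t).
{ intros p q Hd; induction Hd as [l r f Hin| p | p q Hpq IH | p q u H1 IH1 H2 IH2
     | ps qs Hps IH | g p q Hpq IH | p q Hpq IH | p q Hpq IH]; intros z t Ht; simpl.
  - rewrite !semM_subst (HEm _ _ Hin z t Ht). reflexivity.
  - reflexivity.
  - symmetry; auto.
  - rewrite IH1 //; auto.
  - apply IH; auto.
  - apply IH; apply updM_per; auto.
  - apply IH; auto.
  - apply IH; auto. }
have h1 : (1 < n)%N by exact: hn.
have h0 : (0 < n)%N by exact: ltnW h1.
set g0 := Ordinal h0. set g1 := Ordinal h1.
set p0 := Write g0 (iter mN (@Rmove n) (Read (fun g => iter mN (@Lmove n) (Var (nat_of_ord g))))).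
set q0 := Write g1 (iter mN (@Rmove n)
            (Read (fun g => iter mN (@Lmove n) (Write g0 (Var (nat_of_ord g)))))).
have Hv : valid p0 q0.
{ intros X v _ z s. unfold p0, q0. simpl (interp v (Write _ _)).
  cbv beta. rewrite !interp_iterR. simpl (interp v (Read _)). cbv beta. rewrite !interp_iterL. simpl.
  have E1 : forall g : 'I_n, upd s z g (z + Z.of_nat mN)%Z = s (z + Z.of_nat mN)%Z.
  { intro g; unfold upd. have -> : Z.eqb (z + Z.of_nat mN) z = false by (apply Z.eqb_neq; unfold mN; lia).
    reflexivity. }
  rewrite !E1. have -> : (z + Z.of_nat mN - Z.of_nat mN = z)%Z by lia.
  have -> : upd (upd s z g1) z g0 = upd s z g0.
  { apply functional_extensionality; intro j; unfold upd; destruct (Z.eqb j z); auto. }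
  reflexivity. }
have Hd := proj2 (H p0 q0) Hv.
have Hc := Hs _ _ Hd 0%Z (fun _ => g0) (fun _ _ _ => erefl).
unfold p0, q0 in Hc. simpl (semM m (Write _ _)) in Hc.
rewrite !semM_iterR in Hc. simpl (semM m (Read _)) in Hc. rewrite !semM_iterL in Hc.
simpl in Hc.
unfold updM in Hc.
have Hmm : ((Z.of_nat mN - 0) mod m =? 0)%Z = true.
{ apply Z.eqb_eq; rewrite Z.sub_0_r; apply Z.mod_same; lia. }
rewrite Hmm in Hc.
apply (f_equal (fun x => fst (fst x))) in Hc; simpl in Hc; discriminate Hc.
Qed.
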